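(* Let $0<c\le1$ and let $$X=\Big\{\sum_{i,j\in\mathbb Z}|\lambda_{i,j}-\lambda_{i,j+1}|^2 \ :\ \lambda_{i,j}\in\mathbb C,\ \sum_{i,j\in\mathbb Z}|\lambda_{i,j}|^2\le1,\ \sum_{i\in\mathbb Z}|\lambda_{i,0}|^2\ge c^2\Big\}\subset\mathbb R_{\ge0}.$$ Then $\frac{c^4}{3+18c^2}$ is a lower bound for $X$. *)

(* Defs.v *)
From HB Require Import structures.
From mathcomp Require Import all_boot all_order all_algebra.
From mathcomp Require Import all_classical all_reals all_analysis.
From mathcomp Require Import complex.
Set Implicit Arguments. Unset Strict Implicit. Unset Printing Implicit Defensive.
Import Order.TTheory GRing.Theory Num.Theory.

Definition sqmod (R : rcfType) (z : R[i]) : R := (ComplexField.Normc.normc z) ^+ 2.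

(* Main.v *)
Require Import Defs.
From HB Require Import structures.
From mathcomp Require Import all_boot all_order all_algebra.
From mathcomp Require Import all_classical all_reals all_analysis.
From mathcomp Require Import complex.
From mathcomp Require Import ring lra.
From mathcomp Require Import zify.
From Stdlib Require Import Lia.
Import Order.TTheory GRing.Theory Num.Theory.
Local Open Scope ring_scope.
Local Open Scope classical_set_scope.

Section S.
Variable R : realType.

Lemma sqmodE (a b : R) : sqmod (a +i* b)%C = a ^+ 2 + b ^+ 2.
Proof. by rewrite /sqmod /= sqr_sqrtr // addr_ge0 // sqr_ge0. Qed.

Lemma sqmod_ge0 (z : R[i]) : 0 <= sqmod z.
Proof. by rewrite /sqmod sqr_ge0. Qed.

Lemma step_ineq (x y : R[i]) (t : R) : 0 < t ->
  sqmod x - sqmod y <= t / 2 * sqmod (x - y) + (sqmod x + sqmod y) / t /\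
  sqmod y - sqmod x <= t / 2 * sqmod (x - y) + (sqmod x + sqmod y) / t.
Proof.
move=> t0; case: x => a b; case: y => c d.
have -> : ((a +i* b) - (c +i* d) = (a - c) +i* (b - d))%C by [].
rewrite !sqmodE.
have key : forall u v : R, u <= v <-> u * t <= v * t.
  by move=> u v; rewrite ler_pM2r.
have e : forall P Q : R, (t / 2 * P + Q / t) * t = (t ^+ 2 * P / 2 + Q).
  by move=> P Q; field; rewrite lt0r_neq0.
split; apply/key; rewrite e.
  have h1 := sqr_ge0 (t * (a - c) - (a + c)); have h2 := sqr_ge0 (t * (b - d) - (b + d)); have h3 := sqr_ge0 (a - c); have h4 := sqr_ge0 (b-d); nra.
have h1 := sqr_ge0 (t * (a - c) + (a + c)); have h2 := sqr_ge0 (t * (b - d) + (b + d)); have h3 := sqr_ge0 (a - c); have h4 := sqr_ge0 (b-d); nra.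
Qed.

Lemma sum_mono (f : nat -> R) N M : (N <= M)%N -> (forall j, 0 <= f j) ->
  \sum_(0 <= j < N) f j <= \sum_(0 <= j < M) f j.
Proof.
move=> NM f0; rewrite (big_cat_nat (leq0n N) NM) /= lerDl.
by apply: sumr_ge0 => j _.
Qed.

Lemma esum_lb (f : int -> int -> R) (s l : seq int) : uniq s -> uniq l ->
  (forall i j, 0 <= f i j) ->
  ((\sum_(i <- s) \sum_(j <- l) f i j)%:E
     <= \esum_(ij in [set: int * int]) (f ij.1 ij.2)%:E)%E.
Proof.
move=> us ul f0; apply: esum_ge.
exists [set` [seq (i, j) | i <- s, j <- l]].
  split; [exact: finite_seq | by []].
rewrite -fsbig_seq.
  rewrite big_allpairs /= -sumEFin; apply: lee_sum => i _.
  by rewrite sumEFin.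
apply: allpairs_uniq => //; by move=> [? ?] [? ?] _ _.
Qed.

Variable lam : int -> int -> R[i].
Let a i j := sqmod (lam i j).
Let d i j := sqmod (lam i j - lam i (j + 1)).
Let B t i j := t / 2 * d i j + (a i j + a i (j + 1)) / t.

Lemma a_ge0 i j : 0 <= a i j. Proof. exact: sqmod_ge0. Qed.
Lemma d_ge0 i j : 0 <= d i j. Proof. exact: sqmod_ge0. Qed.
Lemma B_ge0 t i j : 0 < t -> 0 <= B t i j.
Proof.
move=> t0; rewrite /B; apply: addr_ge0.
  apply: mulr_ge0; last exact: d_ge0.
  by apply: divr_ge0; [exact: ltW|].
apply: divr_ge0; last exact: ltW.
by apply: addr_ge0; exact: a_ge0.
Qed.

Lemma rowpos t i N : 0 < t -> a i 0 - a i N%:Z <= \sum_(0 <= j < N) B t i j%:Z.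
Proof.
move=> t0; elim: N => [|N IH]; first by rewrite big_nil subrr.
rewrite big_nat_recr //=.
have [h _] := step_ineq (lam i N%:Z) (lam i (N%:Z + 1)) t t0.
have -> : (N.+1)%:Z = N%:Z + 1 by rewrite -addn1 PoszD.
rewrite /B /a /d. rewrite /a in IH.
rewrite -[sqmod (lam i 0) - _](subrKA (sqmod (lam i N))).
by apply: lerD.
Qed.

Lemma rowneg t i N : 0 < t ->
  a i 0 - a i (- N%:Z) <= \sum_(0 <= j < N) B t i (- (j.+1)%:Z).
Proof.
move=> t0; elim: N => [|N IH]; first by rewrite big_nil oppr0 subrr.
rewrite big_nat_recr //=.
have [_ h] := step_ineq (lam i (- (N.+1)%:Z)) (lam i (- (N.+1)%:Z + 1)) t t0.
have e : - (N.+1)%:Z + 1 = - N%:Z by rewrite -addn1 PoszD; ring.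
rewrite e in h.
rewrite /B /a /d e. rewrite /a in IH.
rewrite -[sqmod (lam i 0) - _](subrKA (sqmod (lam i (- N%:Z)))).
by apply: lerD.
Qed.


Let pos i M := \sum_(0 <= j < M.+1) a i j%:Z.
Let neg i M := \sum_(0 <= j < M.+1) a i (- j%:Z).
Let Drow i M := \sum_(0 <= j < M) (d i j%:Z + d i (- (j.+1)%:Z)).

Lemma Bpair t i (j : nat) : B t i j%:Z + B t i (- (j.+1)%:Z) =
  t / 2 * (d i j%:Z + d i (- (j.+1)%:Z)) +
  (a i j%:Z + a i (j.+1)%:Z + a i (- (j.+1)%:Z) + a i (- j%:Z)) / t.
Proof.
have e : - (j.+1)%:Z + 1 = - j%:Z by rewrite -addn1 PoszD; ring.
have e2 : j%:Z + 1 = (j.+1)%:Z by rewrite -addn1 PoszD.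
rewrite /B e e2; ring.
Qed.

Lemma row_final t i M : 0 < t ->
  M%:R * (2 * a i 0) - (pos i M + neg i M) <=
  M%:R * (t / 2 * Drow i M + 2 * (pos i M + neg i M) / t).
Proof.
move=> t0.
set P := \sum_(0 <= j < M) (B t i j%:Z + B t i (- (j.+1)%:Z)).
have h1 : forall N, (N <= M)%N -> 2 * a i 0 - (a i N%:Z + a i (- N%:Z)) <= P.
  move=> N NM; rewrite /P big_split /=.
  apply: (@le_trans _ _ (\sum_(0 <= j < N) B t i j%:Z + \sum_(0 <= j < N) B t i (- (j.+1)%:Z))).
    have := rowpos t i N t0; have := rowneg t i N t0; lra.
  by apply: lerD; apply: sum_mono => // j; exact: B_ge0.
set tail := \sum_(0 <= N < M) (a i (N.+1)%:Z + a i (- (N.+1)%:Z)).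
have h2 : M%:R * (2 * a i 0) - tail <= M%:R * P.
  have -> : M%:R * P = \sum_(0 <= N < M) P by rewrite sumr_const_nat subn0 mulr_natl.
  have -> : M%:R * (2 * a i 0) - tail =
     \sum_(0 <= N < M) (2 * a i 0 - (a i (N.+1)%:Z + a i (- (N.+1)%:Z))).
    by rewrite sumrB sumr_const_nat subn0 mulr_natl.
  by apply: ler_sum_nat => N /andP[_ NM]; exact: h1.
have h3 : tail <= pos i M + neg i M.
  rewrite /tail big_split /pos /neg; apply: lerD; rewrite big_nat_recl //= lerDr;
  exact: a_ge0.
have h5 : P <= t / 2 * Drow i M + 2 * (pos i M + neg i M) / t.
  rewrite /P; under eq_bigr => j _ do rewrite Bpair.
  rewrite big_split /= -mulr_sumr -mulr_suml.
  apply: lerD; first by [].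
  apply: ler_wpM2r; first by rewrite invr_ge0 ltW.
  rewrite !big_split /=.
  have p1 : \sum_(0 <= j < M) a i j%:Z <= pos i M.
    by rewrite /pos big_nat_recr //= lerDl a_ge0.
  have p2 : \sum_(0 <= j < M) a i (j.+1)%:Z <= pos i M.
    by rewrite /pos big_nat_recl //= lerDr a_ge0.
  have n1 : \sum_(0 <= j < M) a i (- (j.+1)%:Z) <= neg i M.
    by rewrite /neg big_nat_recl //= lerDr a_ge0.
  have n2 : \sum_(0 <= j < M) a i (- j%:Z) <= neg i M.
    by rewrite /neg big_nat_recr //= lerDl a_ge0.
  lra.
have M0 : 0 <= M%:R :> R by [].
have := ler_wpM2l M0 h5. lra.
Qed.

End S.

Theorem lemma6p8 (R : realType) (c : R) (hc0 : 0 < c) (hc1 : c <= 1)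
  (lam : int -> int -> R[i])
  (hnorm : (\esum_(ij in [set: int * int]) (sqmod (lam ij.1 ij.2))%:E <= 1)%E)
  (hrow : ((c ^+ 2)%:E <= \esum_(i in [set: int]) (sqmod (lam i 0))%:E)%E) :
  ((c ^+ 4 / (3 + 18 * c ^+ 2))%:E
     <= \esum_(ij in [set: int * int]) (sqmod (lam ij.1 ij.2 - lam ij.1 (ij.2 + 1)))%:E)%E.
Proof.
set c2 := c ^+ 2 in hrow *.
have c20 : 0 < c2 by rewrite /c2 exprn_gt0.
have [s [us hS]] : exists s : seq int, uniq s /\
    19 / 20 * c2 < \sum_(i <- s) sqmod (lam i 0).
  have : ((19 / 20 * c2)%:E < \esum_(i in [set: int]) (sqmod (lam i 0))%:E)%E.
    apply: lt_le_trans hrow; rewrite lte_fin; lra.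
  move=> /ereal_sup_gt [y [A [finA _] <-]] hy.
  exists (finmap.enum_fset (fset_set A)); split; first exact: finmap.fset_uniq.
  by rewrite -lte_fin -sumEFin -fsbig_finite.
have [M hM] : exists M : nat, 20 / c2 < M%:R.
  by exists (Num.truncn (20 / c2)).+1; exact: truncnS_gt.
have hMc : 20 < M%:R * c2.
  by rewrite -(ltr_pM2r c20) divfK ?lt0r_neq0 in hM.
pose t : R := 40 / (9 * c2).
have t0 : 0 < t by rewrite /t divr_gt0 // mulr_gt0.
pose Pt := \sum_(i <- s) \sum_(0 <= j < M.+1) sqmod (lam i j%:Z).
pose Nt := \sum_(i <- s) \sum_(0 <= j < M.+1) sqmod (lam i (- j%:Z)).
pose Dt := \sum_(i <- s) \sum_(0 <= j < M)
   (sqmod (lam i j%:Z - lam i (j%:Z + 1)) +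
    sqmod (lam i (- (j.+1)%:Z) - lam i (- (j.+1)%:Z + 1))).
pose S := \sum_(i <- s) sqmod (lam i 0).
have key : M%:R * (2 * S) - (Pt + Nt) <= M%:R * (t / 2 * Dt + 2 * (Pt + Nt) / t).
  have eL : M%:R * (2 * S) - (Pt + Nt) = \sum_(i <- s) (M%:R * (2 * sqmod (lam i 0)) -
     (\sum_(0 <= j < M.+1) sqmod (lam i j%:Z) + \sum_(0 <= j < M.+1) sqmod (lam i (- j%:Z)))).
    by rewrite sumrB big_split /= -!mulr_sumr.
  have eR : M%:R * (t / 2 * Dt + 2 * (Pt + Nt) / t) = \sum_(i <- s) (M%:R * (t / 2 *
     (\sum_(0 <= j < M) (sqmod (lam i j%:Z - lam i (j%:Z + 1)) +
        sqmod (lam i (- (j.+1)%:Z) - lam i (- (j.+1)%:Z + 1)))) + 2 *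
     (\sum_(0 <= j < M.+1) sqmod (lam i j%:Z) + \sum_(0 <= j < M.+1) sqmod (lam i (- j%:Z))) / t)).
    rewrite -mulr_sumr big_split /= -mulr_sumr -mulr_suml -mulr_sumr big_split.
    by [].
  rewrite eL eR; apply: ler_sum => i _; exact: row_final.
have injP : injective Posz by move=> x y [].
have injN : injective (fun j : nat => - j%:Z) by move=> x y /oppr_inj [].
have injN' : injective (fun j : nat => - (j.+1)%:Z) by move=> x y /oppr_inj [].
have hP : Pt <= 1.
  have -> : Pt = \sum_(i <- s) \sum_(j <- map Posz (iota 0 M.+1)) sqmod (lam i j).
    by apply: eq_bigr => i _; rewrite big_map.
  rewrite -lee_fin; apply: le_trans hnorm.
  apply: (@esum_lb _ (fun i j => sqmod (lam i j)) s) => //.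
    by rewrite map_inj_uniq ?iota_uniq.
  move=> i j; exact: sqmod_ge0.
have hN : Nt <= 1.
  have -> : Nt = \sum_(i <- s) \sum_(j <- map (fun j : nat => - j%:Z) (iota 0 M.+1)) sqmod (lam i j).
    by apply: eq_bigr => i _; rewrite big_map.
  rewrite -lee_fin; apply: le_trans hnorm.
  apply: (@esum_lb _ (fun i j => sqmod (lam i j)) s) => //.
    by rewrite map_inj_uniq ?iota_uniq.
  move=> i j; exact: sqmod_ge0.
have hD : (Dt%:E <= \esum_(ij in [set: int * int]) (sqmod (lam ij.1 ij.2 - lam ij.1 (ij.2 + 1)))%:E)%E.
  have -> : Dt = \sum_(i <- s) \sum_(j <- map Posz (iota 0 M) ++
      map (fun j : nat => - (j.+1)%:Z) (iota 0 M)) sqmod (lam i j - lam i (j + 1)).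
    by apply: eq_bigr => i _; rewrite big_cat !big_map big_split /index_iota subn0.
  apply: (@esum_lb _ (fun i j => sqmod (lam i j - lam i (j + 1))) s) => //.
    rewrite cat_uniq; apply/and3P; split.
    - by rewrite map_inj_uniq ?iota_uniq.
    - apply/hasPn => x /mapP [j _ ->]; apply/negP => /mapP [k _]; rewrite -NegzE; by [].
    - by rewrite map_inj_uniq ?iota_uniq.
  move=> i j; exact: sqmod_ge0.
have P0 : 0 <= Pt by apply: sumr_ge0 => i _; apply: sumr_ge0 => j _; exact: sqmod_ge0.
have N0 : 0 <= Nt by apply: sumr_ge0 => i _; apply: sumr_ge0 => j _; exact: sqmod_ge0.
have c2n0 : c2 != 0 by rewrite lt0r_neq0.
have E2 : 2 * (Pt + Nt) / t = (Pt + Nt) * (9 * c2 / 20).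
  by rewrite /t; field; rewrite c2n0 /=; lra.
set Y := Dt * (20 / (9 * c2)).
have T2 : t / 2 * Dt = Y by rewrite /Y /t; field; rewrite c2n0.
rewrite E2 T2 in key.
have M0 : 0 < M%:R :> R by apply: lt_trans hM; rewrite divr_gt0.
have k2 : (Pt + Nt) * (9 * c2 / 20) <= 2 * (9 * c2 / 20).
  by apply: ler_wpM2r; [apply: divr_ge0; lra | lra].
have k3 := ler_wpM2l (ltW M0) k2.
have hS' : M%:R * (19 / 20 * c2) < M%:R * S by rewrite ltr_pM2l.
have hY : 2 * S - c2 < Y.
  rewrite -(ltr_pM2l M0); lra.
have DY : Dt = Y * (9 * c2 / 20) by rewrite /Y; field; rewrite c2n0.
have hD2 : 9 / 10 * c2 * (9 * c2 / 20) < Dt.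
  have hS0 : 19 / 20 * c2 < S by []. rewrite DY ltr_pM2r; [lra | apply: divr_gt0; lra].
apply: le_trans hD; rewrite lee_fin.
have c4 : c ^+ 4 = c2 * c2 by rewrite /c2 -exprD.
rewrite c4 ler_pdivrMr; last lra.
nra.
Qed.
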